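(* Let $f,g\in F$ with $g\neq f$ be mutually singular with respect to each other, and let $\vec f=(f,g)$. If $T$ is a reasonable test, then $f(A^{\vec f}_{T,f})=g(A^{\vec f}_{T,g})=1$.
   Context: Let $\Omega=\{0,1\}$, $\Omega^\infty$ the set of infinite sequences $\omega=(\omega_1,\omega_2,\dots)$, and $\omega^t=(\omega_1,\dots,\omega_t)$ (also used for the cylinder set of all sequences with this prefix; $\omega^0=\emptyset$). $\mathcal G_t$ is the $\sigma$-algebra generated by the length-$t$ cylinders and $\mathcal G_\infty$ the $\sigma$-algebra generated by all cylinders. $\Delta(\Omega)$ is the set of probability distributions on $\Omega$; for $p\in\Delta(\Omega)$ and $x\in\Omega$, $p[x]$ is the probability of $x$. A forecasting strategy is a map $f:\bigcup_{t\ge0}(\Omega\times\Delta(\Omega)\times\Delta(\Omega))^t\to\Delta(\Omega)$; $F$ is the set of all forecasting strategies. Given an ordered pair $\vec f=(f,g)\in F\times F$ and $\omega\in\Omega^\infty$, the play path $(\omega,\vec f)\in(\Omega\times\Delta(\Omega)\times\Delta(\Omega))^\infty$ is defined recursively: $(\omega,\vec f)^0=\emptyset$ and its $t$-th entry is $(\omega_t,f((\omega,\vec f)^{t-1}),g((\omega,\vec f)^{t-1}))$. The pair $\vec f$ induces two probability measures on $(\Omega^\infty,\mathcal G_\infty)$, again denoted $f$ and $g$, determined by $f(\omega^t)=\prod_{n=1}^t f((\omega,\vec f)^{n-1})[\omega_n]$ and $g(\omega^t)=\prod_{n=1}^t g((\omega,\vec f)^{n-1})[\omega_n]$. A (cardinal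 comparison) test is a sequence $T=(T_t)_{t>0}$ of $\mathcal G_t$-measurable functions $T_t:(\Omega\times\Delta(\Omega)\times\Delta(\Omega))^\infty\to[0,1]$; write $T_t(\omega,\vec f)=T_t((\omega,\vec f))$ and $T(\omega,\vec f)=\lim_t T_t(\omega,\vec f)$ whenever the limit exists. For $\epsilon\in(0,1)$ let $L^{\vec f}_{T,\epsilon}=\{\omega:T(\omega,\vec f)\text{ exists and }>\epsilon\}$ and $R^{\vec f}_{T,\epsilon}=\{\omega:T(\omega,\vec f)\text{ exists and }<\epsilon\}$. $T$ is reasonable if for all $\vec f=(f,g)$ and measurable $A$: for $\epsilon\in(0,\frac12)$, if $g(A)>0$ and $f(A)<\frac{\epsilon}{1-\epsilon}g(A)$ then $g(A\cap R^{\vec f}_{T,\epsilon})>0$; and for $\epsilon\in(\frac12,1)$, if $f(A)>0$ and $g(A)<\frac{1-\epsilon}{\epsilon}f(A)$ then $f(A\cap L^{\vec f}_{T,\epsilon})>0$. Let $A^{\vec f}_{T,f}=\{\omega: T_t(\omega,\vec f)\to1\}$ and $A^{\vec f}_{T,g}=\{\omega: T_t(\omega,\vec f)\to0\}$. Two forecasting strategies $f\ne g$ are mutually singular with respect to each other if there exist disjoint sets $C_f,C_g\subseteq(\Omega\times\Delta(\Omega)\times\Delta(\Omega))^\infty$ with $f(\{\omega:(\omega,\vec f)\in C_f\})=g(\{\omega:(\omega,\vec f)\in C_g\})=1$, where $\vec f=(f,g)$ and $f,g$ on the left denote the induced measures. *)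

(* Defs.v *)
From Stdlib Require Import Reals List.
Open Scope R_scope.

(* Omega = {0,1} is bool (true = 1). A distribution on Omega is given by
   its probability of 1. *)
Record Dist := mkDist { pr1 : R; pr1_ge0 : 0 <= pr1; pr1_le1 : pr1 <= 1 }.

Definition prob (p : Dist) (x : bool) : R := if x then pr1 p else 1 - pr1 p.

Definition Entry := (bool * Dist * Dist)%type.
(* finite histories, in chronological order *)
Definition Hist := list Entry.
Definition Strategy := Hist -> Dist.
(* infinite sequences; omega_{n+1} is (w n) *)
Definition Seq := nat -> bool.

Fixpoint hist (w : Seq) (f g : Strategy) (t : nat) : Hist :=
  match t with
  | O => nil
  | S n => hist w f g n ++ ((w n, f (hist w f g n), g (hist w f g n)) :: nil)
  end.

Definition path (w : Seq) (f g : Strategy) : nat -> Entry :=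
  fun n => (w n, f (hist w f g n), g (hist w f g n)).

Definition cylinder (w : Seq) (t : nat) : Seq -> Prop :=
  fun v => forall i, (i < t)%nat -> v i = w i.

Inductive measurable : (Seq -> Prop) -> Prop :=
| meas_cyl w t : measurable (cylinder w t)
| meas_compl A : measurable A -> measurable (fun v => ~ A v)
| meas_union (A : nat -> Seq -> Prop) :
    (forall n, measurable (A n)) -> measurable (fun v => exists n, A n v)
| meas_ext A B : measurable A -> (forall v, A v <-> B v) -> measurable B.

Definition is_prob_measure (mu : (Seq -> Prop) -> R) : Prop :=
  (forall A, measurable A -> 0 <= mu A) /\
  mu (fun _ => True) = 1 /\
  (forall A : nat -> Seq -> Prop,
     (forall n, measurable (A n)) ->
     (forall m n, m <> n -> forall v, A m v -> A n v -> False) ->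
     infinite_sum (fun n => mu (A n)) (mu (fun v => exists n, A n v))).

Fixpoint cyl_prob (sel : Strategy) (w : Seq) (f g : Strategy) (t : nat) : R :=
  match t with
  | O => 1
  | S n => cyl_prob sel w f g n * prob (sel (hist w f g n)) (w n)
  end.

Definition induces (sel f g : Strategy) (mu : (Seq -> Prop) -> R) : Prop :=
  is_prob_measure mu /\
  forall w t, mu (cylinder w t) = cyl_prob sel w f g t.

(* A test: T t h is T_t evaluated on a path whose length-t prefix is h
   (G_t-measurability = dependence on the first t entries only). *)
Definition Test := nat -> Hist -> R.

Definition is_test (T : Test) : Prop := forall t h, 0 <= T t h <= 1.

Definition Tseq (T : Test) (w : Seq) (f g : Strategy) : nat -> R :=
  fun t => T t (hist w f g t).

Definition Lset (T : Test) (f g : Strategy) (eps : R) : Seq -> Prop :=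
  fun w => exists l, Un_cv (Tseq T w f g) l /\ l > eps.

Definition Rset (T : Test) (f g : Strategy) (eps : R) : Seq -> Prop :=
  fun w => exists l, Un_cv (Tseq T w f g) l /\ l < eps.

Definition reasonable (T : Test) : Prop :=
  forall (f g : Strategy) (muf mug : (Seq -> Prop) -> R),
    induces f f g muf -> induces g f g mug ->
    forall A, measurable A ->
      (forall eps, 0 < eps < 1/2 ->
         mug A > 0 -> muf A < eps / (1 - eps) * mug A ->
         mug (fun w => A w /\ Rset T f g eps w) > 0) /\
      (forall eps, 1/2 < eps < 1 ->
         muf A > 0 -> mug A < (1 - eps) / eps * muf A ->
         muf (fun w => A w /\ Lset T f g eps w) > 0).

Definition A_f (T : Test) (f g : Strategy) : Seq -> Prop :=
  fun w => Un_cv (Tseq T w f g) 1.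
Definition A_g (T : Test) (f g : Strategy) : Seq -> Prop :=
  fun w => Un_cv (Tseq T w f g) 0.

Definition mutually_singular (f g : Strategy) (muf mug : (Seq -> Prop) -> R) : Prop :=
  f <> g /\
  exists Cf Cg : (nat -> Entry) -> Prop,
    (forall x, Cf x -> Cg x -> False) /\
    measurable (fun w => Cf (path w f g)) /\
    measurable (fun w => Cg (path w f g)) /\
    muf (fun w => Cf (path w f g)) = 1 /\
    mug (fun w => Cg (path w f g)) = 1.

(* Main.v *)
Require Import Defs.
From Stdlib Require Import Reals.
From Stdlib Require Import Lra Lia Classical FunctionalExtensionality PropExtensionality.
Open Scope R_scope.

Lemma pext (A B : Seq -> Prop) : (forall v, A v <-> B v) -> A = B.
Proof. intro H; extensionality v; apply propositional_extensionality; apply H. Qed.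

Definition wtrue : Seq := fun _ => true.

Lemma meas_full : measurable (fun _ => True).
Proof. apply meas_ext with (cylinder wtrue 0). constructor.
  intros v; split; auto. intros _ i Hi; lia. Qed.

Lemma meas_empty : measurable (fun _ => False).
Proof. apply meas_ext with (fun v => ~ True). apply meas_compl, meas_full. intros v; tauto. Qed.

Lemma meas_or A B : measurable A -> measurable B -> measurable (fun v => A v \/ B v).
Proof. intros HA HB.
  apply meas_ext with (fun v => exists n, (match n with O => A | _ => B end) v).
  apply meas_union. intros [|n]; auto.
  intros v; split. intros [[|n] H]; auto. intros [H|H]; [exists O | exists 1%nat]; auto. Qed.

Lemma meas_all (A : nat -> Seq -> Prop) : (forall n, measurable (A n)) -> measurable (fun v => forall n, A n v).
Proof. intros H. apply meas_ext with (fun v => ~ exists n, ~ A n v).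
  apply meas_compl, meas_union; intros n; apply meas_compl, H.
  intros v; split. intros H1 n. apply NNPP. intros H2. apply H1; eauto.
  intros H1 [n H2]; auto. Qed.

Lemma meas_and A B : measurable A -> measurable B -> measurable (fun v => A v /\ B v).
Proof. intros HA HB. apply meas_ext with (fun v => forall n, (match n with O => A | _ => B end) v).
  apply meas_all; intros [|n]; auto.
  intros v; split. intros H; split; [apply (H O) | apply (H 1%nat)]. intros [H1 H2] [|n]; auto. Qed.

Lemma meas_dep n (P : Seq -> Prop) :
  (forall v w, (forall i, (i < n)%nat -> v i = w i) -> (P v <-> P w)) -> measurable P.
Proof.
  intros HP.
  assert (K : forall k w, measurable (fun v => P v /\ forall i, (k <= i < n)%nat -> v i = w i)).
  { induction k as [|k IH]; intros w.
    - destruct (classic (P w)) as [Hw|Hw].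
      + apply meas_ext with (cylinder w n). constructor.
        intros v; split. intros Hc; split. apply (HP v w); auto. intros i Hi; apply Hc; lia.
        intros [_ Hc] i Hi; apply Hc; lia.
      + apply meas_ext with (fun _ => False). apply meas_empty.
        intros v; split; [tauto|]. intros [Hv Hc]. apply Hw. apply (HP v w); auto. intros i Hi; apply Hc; lia.
    - set (u b := fun i => if Nat.eq_dec i k then b else w i).
      apply meas_ext with (fun v => (P v /\ forall i, (k <= i < n)%nat -> v i = u true i) \/ (P v /\ forall i, (k <= i < n)%nat -> v i = u false i)).
      apply meas_or; apply IH.
      intros v; split.
      + intros [[H1 H2]|[H1 H2]]; split; auto; intros i Hi;
         rewrite (H2 i ltac:(lia)); unfold u; destruct (Nat.eq_dec i k); first [lia|reflexivity].
      + intros [H1 H2]. destruct (v k) eqn:E; [left|right]; split; auto; intros i Hi; unfold u; destruct (Nat.eq_dec i k); first [subst; auto; fail | apply H2; lia]. }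
  apply meas_ext with (fun v => P v /\ forall i, (n <= i < n)%nat -> v i = wtrue i).
  apply K. intros v; split; [tauto|]. intros H; split; auto; intros; lia.
Qed.

Lemma hist_ext f g n v w : (forall i, (i < n)%nat -> v i = w i) -> hist v f g n = hist w f g n.
Proof. induction n; intros H; simpl; auto. rewrite IHn by (intros; apply H; lia).
  rewrite (H n) by lia. reflexivity. Qed.

Lemma meas_tail T f g (Q : nat -> R -> Prop) :
  measurable (fun v => exists N, forall n, (N <= n)%nat -> Q n (Tseq T v f g n)).
Proof.
  apply meas_union; intros N. apply meas_all; intros n.
  apply (meas_dep n). intros v w H. unfold Tseq. rewrite (hist_ext f g n v w H). tauto.
Qed.

Lemma mu_empty mu : is_prob_measure mu -> mu (fun _ => False) = 0.
Proof.
  intros [H0 [H1 H2]].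
  assert (Hs := H2 (fun _ _ => False) (fun _ => meas_empty) (fun m n _ v a b => a)).
  assert (E0 : (fun v : Seq => exists _ : nat, False) = (fun _ : Seq => False))
    by (apply pext; intros v; split; [intros [_ []]| tauto]).
  cbv beta in Hs; rewrite E0 in Hs.
  set (c := mu (fun _ => False)) in *.
  destruct (Req_dec c 0) as [E|E]; auto. exfalso.
  assert (Hc : Rabs c > 0) by (apply Rabs_pos_lt; auto).
  destruct (Hs (Rabs c / 2)) as [N HN]. lra.
  pose proof (HN N ltac:(lia)) as A1. pose proof (HN (S N) ltac:(lia)) as A2.
  rewrite sum_cte in A1, A2. rewrite S_INR in A2. unfold R_dist in *.
  set (x := INR (S N)) in *. set (y := c * x) in *.
  replace (c * (x + 1) - c) with (y - c + c) in A2 by (unfold y; ring).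
  revert A1 A2 Hc. generalize (y - c). intros a. unfold Rabs; repeat destruct Rcase_abs; lra.
Qed.

Lemma mu_add mu A B : is_prob_measure mu -> measurable A -> measurable B ->
  (forall v, A v -> B v -> False) -> mu (fun v => A v \/ B v) = mu A + mu B.
Proof.
  intros Hmu HA HB Hd. pose proof (mu_empty mu Hmu) as He. destruct Hmu as [H0 [H1 H2]].
  set (F := fun n : nat => match n with O => A | 1%nat => B | _ => fun _ => False end).
  assert (MF : forall n, measurable (F n)) by (intros [|[|n]]; simpl; auto using meas_empty).
  assert (DF : forall m n, m <> n -> forall v, F m v -> F n v -> False).
  { intros m n Hmn v Hm Hn. destruct m as [|[|m]]; destruct n as [|[|n]]; simpl in *;
      try tauto; try congruence; eauto. }
  assert (Hs := H2 F MF DF).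
  replace (fun v => exists n, F n v) with (fun v => A v \/ B v) in Hs.
  2:{ apply pext; intros v; split. intros [H|H]; [exists O|exists 1%nat]; auto.
      intros [[|[|n]] H]; simpl in H; auto; contradiction. }
  apply (uniqueness_sum _ _ _ Hs). intros eps Heps. exists 1%nat. intros n Hn.
  assert (K : forall k, sum_f_R0 (fun n => mu (F n)) (S k) = mu A + mu B).
  { induction k. simpl. reflexivity.
    change (sum_f_R0 (fun n => mu (F n)) (S (S k))) with
      (sum_f_R0 (fun n => mu (F n)) (S k) + mu (F (S (S k)))).
    rewrite IHk. simpl. rewrite He. ring. }
  destruct n. lia. rewrite K. unfold R_dist. replace (mu A + mu B - (mu A + mu B)) with 0 by ring.
  rewrite Rabs_R0; lra.
Qed.

Lemma mu_compl mu A : is_prob_measure mu -> measurable A -> mu (fun v => ~ A v) = 1 - mu A.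
Proof.
  intros Hmu HA. assert (E := mu_add mu A (fun v => ~ A v) Hmu HA (meas_compl _ HA) (fun v a b => b a)).
  cbv beta in E. replace (fun v => A v \/ ~ A v) with (fun _ : Seq => True) in E.
  destruct Hmu as [_ [H1 _]]. lra.
  apply pext; intros v; split; auto. intros _; apply classic.
Qed.

Lemma mu_mono mu A B : is_prob_measure mu -> measurable A -> measurable B ->
  (forall v, A v -> B v) -> mu A <= mu B.
Proof.
  intros Hmu HA HB H.
  assert (E := mu_add mu A (fun v => B v /\ ~ A v) Hmu HA (meas_and _ _ HB (meas_compl _ HA)) (fun v a b => proj2 b a)).
  cbv beta in E. replace (fun v => A v \/ (B v /\ ~ A v)) with B in E.
  assert (0 <= mu (fun v => B v /\ ~ A v)) by (apply (proj1 Hmu); apply meas_and; auto; apply meas_compl; auto).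
  lra.
  apply pext; intros v; split. intros Hb; destruct (classic (A v)); auto.
  intros [Ha|[Hb _]]; auto.
Qed.

Lemma mu_null_union mu (N : nat -> Seq -> Prop) : is_prob_measure mu ->
  (forall k, measurable (N k)) -> (forall k, mu (N k) = 0) -> mu (fun v => exists k, N k v) = 0.
Proof.
  intros Hmu MN EN.
  set (D := fun k v => N k v /\ forall j, (j < k)%nat -> ~ N j v).
  assert (MD : forall k, measurable (D k)).
  { intros k. apply meas_and; auto. apply meas_all; intros j.
    destruct (classic (j < k)%nat) as [Hj|Hj].
    - apply meas_ext with (fun v => ~ N j v). apply meas_compl; auto. intros v; tauto.
    - apply meas_ext with (fun _ => True). apply meas_full. intros v; tauto. }
  assert (ED : forall k, mu (D k) = 0).
  { intros k. apply Rle_antisym. rewrite <- (EN k). apply mu_mono; auto. intros v [H _]; auto.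
    apply (proj1 Hmu); auto. }
  assert (DD : forall m n, m <> n -> forall v, D m v -> D n v -> False).
  { intros m n Hmn v [Hm Hm'] [Hn Hn']. destruct (Nat.lt_total m n) as [H|[H|H]].
    apply (Hn' m); auto. contradiction. apply (Hm' n); auto. }
  assert (Hs := proj2 (proj2 Hmu) D MD DD).
  replace (fun v => exists n, D n v) with (fun v => exists k, N k v) in Hs.
  - apply (uniqueness_sum _ _ _ Hs). intros eps Heps. exists O. intros n _.
    replace (fun k => mu (D k)) with (fun _ : nat => 0) by (extensionality k; auto).
    rewrite sum_cte. unfold R_dist. replace (0 * INR (S n) - 0) with 0 by ring. rewrite Rabs_R0; lra.
  - apply pext; intros v; split.
    + intros [k Hk]. revert Hk. induction k as [k IH] using (well_founded_induction Wf_nat.lt_wf). intros Hk.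
      destruct (classic (exists j, (j < k)%nat /\ N j v)) as [[j [Hj1 Hj2]]|Hno].
      * apply (IH j); auto.
      * exists k. split; auto. intros j Hj HN. apply Hno; eauto.
    + intros [k [Hk _]]; eauto.
Qed.

Lemma key mu1 mu2 (C1 C2 S S' : Seq -> Prop) :
  is_prob_measure mu1 -> is_prob_measure mu2 ->
  measurable C1 -> measurable C2 -> measurable S ->
  (forall v, C1 v -> C2 v -> False) -> mu1 C1 = 1 -> mu2 C2 = 1 ->
  (forall v, S' v -> S v) ->
  (forall A, measurable A -> mu1 A > 0 -> mu2 A = 0 -> mu1 (fun v => A v /\ S' v) > 0) ->
  mu1 S = 1.
Proof.
  intros P1 P2 M1 M2 MS Hd E1 E2 HS H.
  set (A := fun v => C1 v /\ ~ S v).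
  assert (MA : measurable A) by (apply meas_and; auto; apply meas_compl; auto).
  assert (E2A : mu2 A = 0).
  { apply Rle_antisym.
    - assert (mu2 A <= mu2 (fun v => ~ C2 v)).
      { apply mu_mono; auto. apply meas_compl; auto. intros v [Hc _] Hc2; eauto. }
      rewrite mu_compl in H0 by auto. lra.
    - apply (proj1 P2); auto. }
  assert (E1A : mu1 A = 0).
  { destruct (Rle_lt_or_eq_dec 0 (mu1 A) (proj1 P1 A MA)) as [Hlt|Heq]; auto.
    exfalso. pose proof (H A MA Hlt E2A) as Hp.
    replace (fun v => A v /\ S' v) with (fun _ : Seq => False) in Hp.
    rewrite mu_empty in Hp; auto; lra.
    apply pext; intros v; unfold A; split; [tauto|]. intros [[_ Hn] Hs']; auto. }
  assert (E3 : mu1 (fun v => ~ S v) = 0).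
  { replace (fun v => ~ S v) with (fun v => A v \/ (~ C1 v /\ ~ S v)).
    - rewrite mu_add; auto.
      + assert (mu1 (fun v => ~ C1 v /\ ~ S v) <= mu1 (fun v => ~ C1 v)).
        { apply mu_mono; auto. apply meas_and; apply meas_compl; auto. apply meas_compl; auto.
          intros v [h _]; auto. }
        rewrite mu_compl in H0 by auto.
        assert (0 <= mu1 (fun v => ~ C1 v /\ ~ S v)).
        { apply (proj1 P1). apply meas_and; apply meas_compl; auto. }
        lra.
      + apply meas_and; apply meas_compl; auto.
      + unfold A; intros v [h1 _] [h2 _]; auto.
    - apply pext; intros v; unfold A; split.
      + intros [[_ h]|[_ h]]; auto.
      + intros h. destruct (classic (C1 v)); auto. }
  rewrite mu_compl in E3 by auto. lra.
Qed.

Definition Mup T f g e := fun v => exists N, forall n, (N <= n)%nat -> e <= Tseq T v f g n.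
Definition Mlow T f g e := fun v => exists N, forall n, (N <= n)%nat -> Tseq T v f g n <= e.

Lemma inv_bounds k : 0 < / (INR k + 3) < 1/2.
Proof.
  pose proof (pos_INR k). split. apply Rinv_0_lt_compat; lra.
  apply Rle_lt_trans with (/ 3). apply Rinv_le_contravar; lra. replace (1/2) with (/2) by field. apply Rinv_lt_contravar; lra.
Qed.

Lemma small_inv eps : 0 < eps -> exists k, / (INR k + 3) < eps.
Proof.
  intros H. destruct (archimed_cor1 eps H) as [N [HN HN0]]. exists N.
  apply Rle_lt_trans with (/ INR N); auto. apply Rinv_le_contravar.
  apply lt_0_INR; auto. lra.
Qed.

Theorem mainTheorem12 (f g : Strategy) (muf mug : (Seq -> Prop) -> R) (T : Test) :
  f <> g ->
  induces f f g muf -> induces g f g mug ->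
  mutually_singular f g muf mug ->
  is_test T -> reasonable T ->
  muf (A_f T f g) = 1 /\ mug (A_g T f g) = 1.
Proof.
  intros Hneq If Ig [_ [Cf [Cg [Hd [MCf [MCg [E1 E2]]]]]]] HT HR.
  pose proof (proj1 If) as Pf. pose proof (proj1 Ig) as Pg.
  split.
  - assert (Hup : forall e, 1/2 < e < 1 -> muf (Mup T f g e) = 1).
    { intros e He.
      apply (key muf mug _ _ _ (Lset T f g e) Pf Pg MCf MCg (meas_tail T f g (fun _ x => e <= x)) (fun v a b => Hd (path v f g) a b) E1 E2).
      - intros v [l [Hl Hle]]. destruct (Hl (l - e)) as [N HN]. lra.
        exists N; intros n Hn; specialize (HN n Hn); unfold R_dist in HN; apply Rabs_def2 in HN; lra.
      - intros A MA Hpos Hz. apply (proj2 (HR f g muf mug If Ig A MA) e He Hpos). rewrite Hz.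
        apply Rmult_lt_0_compat; [apply Rdiv_lt_0_compat; lra | lra]. }
    set (Nk := fun k v => ~ Mup T f g (1 - / (INR k + 3)) v).
    assert (MN : forall k, measurable (Nk k)).
    { intros k; apply meas_compl. apply (meas_tail T f g (fun _ x => 1 - / (INR k + 3) <= x)). }
    assert (EN : forall k, muf (Nk k) = 0).
    { intros k. unfold Nk. rewrite mu_compl; auto.
      rewrite Hup. ring. pose proof (inv_bounds k); lra.
      apply (meas_tail T f g (fun _ x => 1 - / (INR k + 3) <= x)). }
    replace (A_f T f g) with (fun v => ~ exists k, Nk k v).
    + rewrite mu_compl; auto. rewrite mu_null_union; auto. ring. apply meas_union; auto.
    + apply pext; intros v; unfold A_f, Nk; split.
      * intros H eps Heps. destruct (small_inv eps Heps) as [k Hk].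
        assert (HM : Mup T f g (1 - / (INR k + 3)) v) by (apply NNPP; intro; apply H; eauto).
        destruct HM as [N HN]. exists N. intros n Hn. specialize (HN n Hn).
        pose proof (HT n (hist v f g n)). unfold Tseq in *. unfold R_dist.
        apply Rabs_def1; lra.
      * intros H [k Hk]. apply Hk. pose proof (inv_bounds k).
        destruct (H (/ (INR k + 3))) as [N HN]. lra.
        exists N; intros n Hn; specialize (HN n Hn); unfold R_dist in HN; apply Rabs_def2 in HN; lra.
  - assert (Hlow : forall e, 0 < e < 1/2 -> mug (Mlow T f g e) = 1).
    { intros e He.
      apply (key mug muf _ _ _ (Defs.Rset T f g e) Pg Pf MCg MCf (meas_tail T f g (fun _ x => x <= e)) (fun v a b => Hd (path v f g) b a) E2 E1).
      - intros v [l [Hl Hle]]. destruct (Hl (e - l)) as [N HN]. lra.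
        exists N; intros n Hn; specialize (HN n Hn); unfold R_dist in HN; apply Rabs_def2 in HN; lra.
      - intros A MA Hpos Hz. apply (proj1 (HR f g muf mug If Ig A MA) e He Hpos). rewrite Hz.
        apply Rmult_lt_0_compat; [apply Rdiv_lt_0_compat; lra | lra]. }
    set (Nk := fun k v => ~ Mlow T f g (/ (INR k + 3)) v).
    assert (MN : forall k, measurable (Nk k)).
    { intros k; apply meas_compl. apply (meas_tail T f g (fun _ x => x <= / (INR k + 3))). }
    assert (EN : forall k, mug (Nk k) = 0).
    { intros k. unfold Nk. rewrite mu_compl; auto.
      rewrite Hlow. ring. pose proof (inv_bounds k); lra.
      apply (meas_tail T f g (fun _ x => x <= / (INR k + 3))). }
    replace (A_g T f g) with (fun v => ~ exists k, Nk k v).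
    + rewrite mu_compl; auto. rewrite mu_null_union; auto. ring. apply meas_union; auto.
    + apply pext; intros v; unfold A_g, Nk; split.
      * intros H eps Heps. destruct (small_inv eps Heps) as [k Hk].
        assert (HM : Mlow T f g (/ (INR k + 3)) v) by (apply NNPP; intro; apply H; eauto).
        destruct HM as [N HN]. exists N. intros n Hn. specialize (HN n Hn).
        pose proof (HT n (hist v f g n)). unfold Tseq in *. unfold R_dist.
        apply Rabs_def1; lra.
      * intros H [k Hk]. apply Hk. pose proof (inv_bounds k).
        destruct (H (/ (INR k + 3))) as [N HN]. lra.
        exists N; intros n Hn; specialize (HN n Hn); unfold R_dist in HN; apply Rabs_def2 in HN; lra.
Qed.
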